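(* Let $G_1$ and $G_2$ be finite groups each satisfying: for all $x,y$, $x^2=1$ or $y^2=1$ or $xy=yx$. Suppose that every abelian section of $G_2$ is isomorphic to a section of $G_1$, and that $G_1$ is nonabelian. Then $G_2$ is isomorphic to a section of $G_1$.
   Context: A section of a group is a quotient of one of its subgroups. *)

(* Defs.v *)
From mathcomp Require Import all_boot all_fingroup.
Set Implicit Arguments. Unset Strict Implicit. Unset Printing Implicit Defensive.
Local Open Scope group_scope.

Definition sq_or_comm (gT : finGroupType) (G : {set gT}) : Prop :=
  forall x y, x \in G -> y \in G -> x ^+ 2 = 1 \/ y ^+ 2 = 1 \/ commute x y.

Definition isog_section (rT gT : finGroupType) (S : {set rT}) (G : {set gT}) : Prop :=
  exists (H K : {group gT}), [/\ H \subset G, K <| H & S \isog (H / K)].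

(* Main.v *)
Require Import Defs.
From mathcomp Require Import all_boot all_fingroup cyclic.
Set Implicit Arguments. Unset Strict Implicit. Unset Printing Implicit Defensive.
Local Open Scope group_scope.

Lemma inv2 (gT : finGroupType) (x : gT) : x ^+ 2 = 1 -> x^-1 = x.
Proof. by rewrite expgS expg1 => h; apply: (mulgI x); rewrite mulgV h. Qed.

Lemma ord2 (gT : finGroupType) (x : gT) : x != 1 -> x ^+ 2 = 1 -> #[x] = 2.
Proof.
move=> n1 h; have: #[x] %| 2 by rewrite order_dvdn h.
have: 1 < #[x] by rewrite order_gt1.
case: #[x] => [|[|[|k]]] //.
Qed.

Lemma inv_norm (gT : finGroupType) (B : {group gT}) x :
  (forall b, b \in B -> b ^ x \in B) -> x \in 'N(B).
Proof.
move=> h; rewrite inE; apply/subsetP=> y /imsetP[z Bz ->]; exact: h.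
Qed.

Lemma struct (gT : finGroupType) (G : {group gT}) :
  sq_or_comm G -> ~~ abelian G ->
  exists (A : {group gT}) (t : gT),
   [/\ A \subset G, abelian A, t \in G, t \notin A & #[t] = 2] /\
   [/\ forall x, x \in G -> x \notin A -> forall a, a \in A -> a ^ x = a^-1,
       forall x, x \in G -> x \notin A -> x ^+ 2 = 1,
       A ><| <[t]> = G & exists2 a, a \in A & a ^+ 2 != 1].
Proof.
move=> sq nab.
set S := [set x in G | x ^+ 2 != 1].
have sSG : S \subset G by apply/subsetP=> x; rewrite inE => /andP[].
exists <<S>>%G.
have sAG : <<S>> \subset G by rewrite gen_subG.
have abA : abelian <<S>>.
  rewrite abelian_gen; apply/centsP=> x; rewrite inE => /andP[Gx nx] y.
  rewrite inE => /andP[Gy ny].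
  by case: (sq x y Gx Gy) => [/eqP|[/eqP|]]; rewrite ?(negPf nx) ?(negPf ny).
have sq1 : forall x, x \in G -> x \notin <<S>> -> x ^+ 2 = 1.
  move=> x Gx nA; apply/eqP; apply/negPn/negP=> nx; case/negP: nA.
  by apply: mem_gen; rewrite inE Gx.
have invA : forall x, x \in G -> x \notin <<S>> -> forall a, a \in <<S>> -> a ^ x = a^-1.
  move=> x Gx nA a Aa.
  have Ga : a \in G := subsetP sAG a Aa.
  have nxa : x * a \notin <<S>> by rewrite groupMr.
  have := sq1 _ (groupM Gx Ga) nxa; have := sq1 _ Gx nA.
  move=> /inv2 xV; rewrite expgS expg1 => h.
  rewrite conjgE xV; apply: (mulIg a); rewrite mulVg -h !mulgA //.
have [t Gt nAt] : exists2 t, t \in G & t \notin <<S>>.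
  apply/subsetPn; apply: contra nab => sGA; exact: abelianS sGA abA.
have [a0 Aa0 na0] : exists2 a, a \in <<S>> & a ^+ 2 != 1.
  apply/exists_inP; apply: contraR nab => /exists_inP hn.
  have all2 : forall x, x \in G -> x ^+ 2 = 1.
    move=> x Gx; case: (boolP (x \in <<S>>)) => xA; last exact: sq1.
    by apply/eqP; apply/negPn/negP=> h; apply: hn; exists x.
  apply/centsP=> x Gx y Gy; rewrite /commute.
  by rewrite -(inv2 (all2 _ (groupM Gx Gy))) invMg (inv2 (all2 _ Gx)) (inv2 (all2 _ Gy)).
have t2 : t ^+ 2 = 1 := sq1 _ Gt nAt.
have ot : #[t] = 2.
  apply: ord2 t2; apply: contra nAt => /eqP ->; exact: group1.
exists t; split; first by split.
split => //.
have nAt' : <[t]> \subset 'N(<<S>>).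
  rewrite cycle_subG; apply: inv_norm => b Ab; by rewrite (invA _ Gt nAt _ Ab) groupV.
have tI : <<S>> :&: <[t]> = 1.
  apply/eqP; rewrite eqEsubset sub1G andbT; apply/subsetP=> y /setIP[Ay].
  rewrite cycle2g // => /set2P[->|yt]; first exact: group1.
  by rewrite yt in Ay; rewrite Ay in nAt.
rewrite sdprodE //; apply/eqP; rewrite eqEsubset mul_subG ?cycle_subG //=.
apply/subsetP=> x Gx; case: (boolP (x \in <<S>>)) => xA.
  by rewrite -(mulg1 x) mem_mulg ?group1.
have xtA : x * t \in <<S>>.
  apply/negPn/negP=> nxt.
  have := invA _ (groupM Gx Gt) nxt _ Aa0.
  rewrite conjgM (invA _ Gx xA _ Aa0) (invA _ Gt nAt) ?groupV // invgK => h.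
  case/negP: na0; rewrite expgS expg1; apply/eqP.
  by rewrite {1}h mulVg.
rewrite -(mulgK t x) (inv2 t2) mem_mulg ?cycle_id //.
by exists a0.
Qed.

Theorem lemma6 (gT1 gT2 : finGroupType) (G1 : {group gT1}) (G2 : {group gT2}) :
  sq_or_comm G1 -> sq_or_comm G2 ->
  (forall H K : {group gT2}, H \subset G2 -> K <| H ->
     abelian (H / K) -> isog_section (H / K) G1) ->
  ~~ abelian G1 ->
  isog_section G2 G1.
Proof.
move=> sq1 sq2 hyp nab1.
case: (boolP (abelian G2)) => ab2.
  have [H [K [sHG nKH iso]]] := hyp G2 1%G (subxx _) (normal1 _) (quotient_abelian _ ab2).
  by exists H, K; split => //; apply: isog_trans iso; apply: quotient1_isog.
have [A1 [t1 [[sA1 abA1 Gt1 nA1t1 ot1] [inv1 sqo1 sd1 _]]]] := struct sq1 nab1.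
have [A2 [t2 [[sA2 abA2 Gt2 nA2t2 ot2] [inv2' sqo2 sd2 [a0 Aa0 na0]]]]] := struct sq2 ab2.
have [H [K [sHG1 nKH iso]]] :=
  hyp A2 1%G sA2 (normal1 _) (quotient_abelian _ abA2).
have {}iso : A2 \isog H / K by apply: isog_trans iso; apply: quotient1_isog.
have abHK : abelian (H / K) by rewrite -(isog_abelian iso).
have [f injf fA2] := isogP iso.
have nKH' : H \subset 'N(K) := normal_norm nKH.
have sKH : K \subset H := normal_sub nKH.
have sHA1 : H \subset A1.
  apply/subsetP=> h Hh; apply/negPn/negP=> nh.
  have Gh : h \in G1 := subsetP sHG1 h Hh.
  have cos2 : forall y, y \in H -> (coset K y) ^+ 2 = 1.
    move=> y Hy; have Gy : y \in G1 := subsetP sHG1 y Hy.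
    have Ny : y \in 'N(K) := subsetP nKH' y Hy.
    case: (boolP (y \in A1)) => yA; last first.
      by rewrite -morphX // sqo1 // morph1.
    have nhy : h * y \notin A1 by rewrite groupMr.
    have Nh : h \in 'N(K) := subsetP nKH' h Hh.
    have Hhy : h * y \in H by rewrite groupM.
    have Nhy : h * y \in 'N(K) := subsetP nKH' _ Hhy.
    have -> : coset K y = coset K h * coset K (h * y).
      by rewrite -morphM // mulgA -{1}(inv2 (sqo1 _ Gh nh)) mulVg mul1g.
    rewrite expgMn; last first.
      by apply: (centsP abHK); apply: mem_quotient.
    by rewrite -!morphX // (sqo1 _ Gh nh) (sqo1 _ (subsetP sHG1 _ Hhy) nhy) morph1 mulg1.
  have : f a0 \in H / K by rewrite -fA2 mem_morphim.
  case/morphimP => w Nw Hw fw.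
  case/negP: na0; rewrite -(morph_injm_eq1 injf) ?groupX // morphX // fw.
  by rewrite cos2.
have nt1 : forall B : {group gT1}, B \subset A1 -> t1 \in 'N(B).
  move=> B sBA; apply: inv_norm => b Bb.
  by rewrite (inv1 _ Gt1 nA1t1 _ (subsetP sBA b Bb)) groupV.
have NKt1 : t1 \in 'N(K) := nt1 K (subset_trans sKH sHA1).
have NHt1 : t1 \in 'N(H) := nt1 H sHA1.
have c2 : (coset K t1) ^+ 2 = 1.
  by rewrite -morphX // sqo1 // morph1.
have c1 : coset K t1 != 1.
  apply: contra nA1t1 => /eqP /(coset_idr NKt1) Kt.
  exact: subsetP (subset_trans sKH sHA1) _ Kt.
have oc : #[coset K t1] = 2 := ord2 c1 c2.
have dvd : #[coset K t1] %| #[t2] by rewrite oc ot2.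
have actf : {in A2 & <[t2]>, morph_act 'J 'J f (eltm dvd)}.
  move=> a b Aa; rewrite cycle2g // => /set2P[->|->] /=.
    by rewrite conjg1 morph1 conjg1.
  rewrite eltm_id (inv2' _ Gt2 nA2t2 _ Aa) morphV //.
  have : f a \in H / K by rewrite -fA2 mem_morphim.
  case/morphimP => y Ny Hy ->.
  by rewrite -morphJ // (inv1 _ Gt1 nA1t1 _ (subsetP sHA1 y Hy)) morphV.
exists (H <*> <[t1]>)%G, K; split.
- by rewrite join_subG sHG1 cycle_subG.
- by rewrite /normal (subset_trans sKH (joing_subl _ _)) join_subG nKH' cycle_subG.
apply/isogP; exists (sdprodm sd2 actf).
  rewrite injm_sdprodm injf injm_eltm oc ot2 dvdnn /= fA2 im_eltm cycle2g //.
  rewrite eqEsubset sub1set !inE group1 eqxx andbT; apply/subsetP=> z /setIP[Hz] /set2P[->|zc].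
    by rewrite inE.
  rewrite zc in Hz.
  have : t1 \in coset K @*^-1 (H / K) by apply: mem_morphpre.
  rewrite quotientK // mulSGid // => Ht1.
  by rewrite (subsetP sHA1 _ Ht1) in nA1t1.
rewrite im_sdprodm fA2 im_eltm /= norm_joinEr ?cycle_subG // quotientMl //.
by rewrite /quotient morphim_cycle.
Qed.
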